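(* For every $n\ge0$ the maps $L,R:\mathcal{Y}_n\to\mathcal{Q}_n$, $C:\mathcal{Q}_n\to\mathcal{Y}_n$, $\lambda,\rho:\mathfrak{S}_n\to\mathcal{Y}_n$, $\gamma:\mathcal{Y}_n\to\mathfrak{S}_n$, $\mathrm{Des},\mathrm{GDes}:\mathfrak{S}_n\to\mathcal{Q}_n$ and $Z:\mathcal{Q}_n\to\mathfrak{S}_n$ are order-preserving and satisfy $L\circ\lambda=\mathrm{Des}$, $\gamma\circ C=Z$ and $R\circ\rho=\mathrm{GDes}$. Moreover, each pair $(\lambda,\gamma)$, $(L,C)$, $(\mathrm{Des},Z)$, $(\gamma,\rho)$, $(C,R)$, $(Z,\mathrm{GDes})$ is a Galois connection with the first map left adjoint to the second; that is, for all $\sigma\in\mathfrak{S}_n$, $t\in\mathcal{Y}_n$, $\mathsf{S}\in\mathcal{Q}_n$: $\lambda(\sigma)\le t\iff\sigma\le\gamma(t)$; $L(t)\subseteq\mathsf{S}\iff t\le C(\mathsf{S})$; $\mathrm{Des}(\sigma)\subseteq\mathsf{S}\iff\sigma\le Z(\mathsf{S})$; $\gamma(t)\le\sigma\iff t\le\rho(\sigma)$; $C(\mathsf{S})\le t\iff\mathsf{S}\subseteq R(t)$; $Z(\mathsf{S})\le\sigma\iff\mathsf{S}\subseteq\mathrm{GDes}(\sigma)$.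
   Context: $\mathcal{Q}_n$ is the Boolean poset of subsets of $[n-1]$ under inclusion. $\mathfrak{S}_n$ carries the weak order: $\sigma\le\tau$ iff $\mathrm{Inv}(\sigma)\subseteq\mathrm{Inv}(\tau)$, $\mathrm{Inv}(\sigma)=\{(i,j):i<j,\sigma(i)>\sigma(j)\}$. Permutations in one-line notation; $\mathrm{st}(a_1,\dots,a_p)$ is the permutation with the same relative order as distinct integers $a_i$; $\mathrm{id}_n$ identity, $\mathrm{id}_0$ empty. For $\sigma\in\mathfrak{S}_p,\tau\in\mathfrak{S}_q$: $\sigma\vee\tau=(\sigma(1)+q,\dots,\sigma(p)+q,p+q+1,\tau(1),\dots,\tau(q))$, $\sigma\backslash\tau=(\sigma(1)+q,\dots,\sigma(p)+q,\tau(1),\dots,\tau(q))$. $\mathrm{Des}(\sigma)=\{i\in[n-1]:\sigma(i)>\sigma(i+1)\}$; $\mathrm{GDes}(\sigma)=\{p\in[n-1]:\sigma=\alpha\backslash\beta,\ \alpha\in\mathfrak{S}_p\}$ (global descents). For $\mathsf{S}=\{p_1<\dots<p_k\}$, $Z(\mathsf{S})=\mathrm{id}_{p_1}\backslash\mathrm{id}_{p_2-p_1}\backslash\cdots\backslash\mathrm{id}_{n-p_k}$. Trees: $\mathcal{Y}_n$ = rooted planar binary trees with $n$ internal nodes, $\mathcal{Y}_0=\{|\}$; $s\vee t$ = tree whose root has left subtree $s$ and right subtree $t$; $t=t_l\vee t_r$ uniquely for $t\ne|$. Tamari order on $\mathcal{Y}_n$: generated by replacing a subtree $(a\vee b)\vee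 c$ by the larger $a\vee(b\vee c)$. $s\backslash t$: $|\backslash t=t$, $s\backslash t=s_l\vee(s_r\backslash t)$. $1_0=|$, $1_n=1_{n-1}\vee|$. $C(\mathsf{S})=1_{p_1}\backslash1_{p_2-p_1}\backslash\cdots\backslash1_{n-p_k}$. Numbering the leaves of $t$ by $0,\dots,n$ left to right, $L(t)=\{i\in[n-1]:\text{leaf } i\text{ is a left child}\}$. $R(t)=\{j\in[n-1]:t=r\backslash r'\text{ for some } r\in\mathcal{Y}_j\}$. $\lambda$: $\lambda(\mathrm{id}_0)=|$; for $n\ge1$, $j=\sigma^{-1}(n)$, $\lambda(\sigma)=\lambda(\mathrm{st}(\sigma(1),..,\sigma(j-1)))\vee\lambda(\mathrm{st}(\sigma(j+1),..,\sigma(n)))$. $\gamma$: $\gamma(|)=\mathrm{id}_0$, $\gamma(t)=\gamma(t_l)\vee\gamma(t_r)$. $\rho$: $\rho(\mathrm{id}_0)=|$; for $n\ge1$ let $j$ be the smallest element of $\mathrm{GDes}(\sigma)$, or $j=n$ if $\mathrm{GDes}(\sigma)=\emptyset$; then $\rho(\sigma)=\rho(\mathrm{st}(\sigma(1),\dots,\sigma(j-1)))\vee\rho(\mathrm{st}(\sigma(j+1),\dots,\sigma(n)))$. *)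

(* Defs.v *)
From mathcomp Require Import all_boot.
From Stdlib Require Import ClassicalEpsilon.

Set Implicit Arguments.
Unset Strict Implicit.
Unset Printing Implicit Defensive.

Definition decide (P : Prop) : bool :=
  if excluded_middle_informative P then true else false.

Definition is_perm (n : nat) (s : seq nat) : Prop := perm_eq s (iota 1 n).

(* sigma(i), 1-based *)
Definition pv (s : seq nat) (i : nat) : nat := nth 0 s i.-1.

Definition inv_pair (s : seq nat) (i j : nat) : bool :=
  [&& 0 < i, i < j, j <= size s & pv s j < pv s i].

Definition weak_le (s t : seq nat) : Prop :=
  forall i j, inv_pair s i j -> inv_pair t i j.

Definition st (a : seq nat) : seq nat :=
  map (fun x => (count (fun y => y < x) a).+1) a.

Definition pid (n : nat) : seq nat := iota 1 n.

Definition pvee (s t : seq nat) : seq nat :=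
  map (addn (size t)) s ++ (size s + size t).+1 :: t.
Definition pbs (s t : seq nat) : seq nat :=
  map (addn (size t)) s ++ t.

(* ===== Subsets of [n-1] (elements of Q_n) as boolean predicates on nat ===== *)
Definition qset (n : nat) (S : nat -> bool) : Prop :=
  forall i, S i -> 0 < i < n.
Definition subq (S T : nat -> bool) : Prop := forall i, S i -> T i.

Definition Des (s : seq nat) (i : nat) : bool :=
  (0 < i < size s) && (pv s i.+1 < pv s i).
Definition GDes (s : seq nat) (p : nat) : bool :=
  (0 < p < size s) &&
  decide (exists a b, is_perm p a /\ is_perm (size s - p) b /\ s = pbs a b).

(* the list p_1 - 0, p_2 - p_1, ..., n - p_k of block sizes of S in [n] *)
Definition blocks (n : nat) (S : nat -> bool) : seq nat :=
  pairmap (fun a b => b - a) 0 (rcons [seq i <- iota 1 n.-1 | S i] n).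

Definition Zmap (n : nat) (S : nat -> bool) : seq nat :=
  foldr (fun k acc => pbs (pid k) acc) [::] (blocks n S).

Inductive tree : Type := Leaf | Node of tree & tree.

Fixpoint nodes (t : tree) : nat :=
  if t is Node l r then (nodes l + nodes r).+1 else 0.

Fixpoint tbs (s t : tree) : tree :=
  if s is Node sl sr then Node sl (tbs sr t) else t.

Fixpoint one (n : nat) : tree :=
  if n is k.+1 then Node (one k) Leaf else Leaf.

Definition Cmap (n : nat) (S : nat -> bool) : tree :=
  foldr (fun k acc => tbs (one k) acc) Leaf (blocks n S).

Inductive rot : tree -> tree -> Prop :=
| rot_root a b c : rot (Node (Node a b) c) (Node a (Node b c))
| rot_l l l' r : rot l l' -> rot (Node l r) (Node l' r)
| rot_r l r r' : rot r r' -> rot (Node l r) (Node l r').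

Inductive tam_le : tree -> tree -> Prop :=
| tam_refl t : tam_le t t
| tam_step t u v : rot t u -> tam_le u v -> tam_le t v.

(* for each leaf, left to right: is it a left child? (root leaf: no) *)
Fixpoint leafdirs (t : tree) (isleft : bool) : seq bool :=
  if t is Node l r then leafdirs l true ++ leafdirs r false else [:: isleft].

Definition Lmap (t : tree) (i : nat) : bool :=
  (0 < i < nodes t) && nth false (leafdirs t false) i.

Definition Rmap (t : tree) (j : nat) : bool :=
  (0 < j < nodes t) && decide (exists r r', nodes r = j /\ t = tbs r r').

Fixpoint lam_f (fuel : nat) (s : seq nat) : tree :=
  if fuel is k.+1 then
    if s is [::] then Leaf else
    let j := (index (size s) s).+1 in
    Node (lam_f k (st (take j.-1 s))) (lam_f k (st (drop j s)))
  else Leaf.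
Definition lam (s : seq nat) : tree := lam_f (size s) s.

Fixpoint gam (t : tree) : seq nat :=
  if t is Node l r then pvee (gam l) (gam r) else [::].

Fixpoint rho_f (fuel : nat) (s : seq nat) : tree :=
  if fuel is k.+1 then
    if s is [::] then Leaf else
    let j := head (size s) [seq p <- iota 1 (size s).-1 | GDes s p] in
    Node (rho_f k (st (take j.-1 s))) (rho_f k (st (drop j s)))
  else Leaf.
Definition rho (s : seq nat) : tree := rho_f (size s) s.

(* Main.v *)
Require Import Defs.
From mathcomp Require Import all_boot zify.
From Stdlib Require Import ClassicalEpsilon Classical.
Set Implicit Arguments. Unset Strict Implicit. Unset Printing Implicit Defensive.

Ltac fixsize := repeat (match goal with
  | |- context [@size ?T ?s] => progress change (@size T s) with (@size nat s)
  | H : context [@size ?T ?s] |- _ => progress change (@size T s) with (@size nat s) in H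
  end).
Ltac nlia := fixsize; lia.

Fixpoint Ls (t : tree) : seq nat :=
  if t is Node l r then Ls l ++ nodes l :: Ls r else [::].
Definition lsz t k := nth 0 (Ls t) k.-1.
Definition Nt t i k := [&& 0 < i, i < k, k <= nodes t & k - lsz t k <= i].

Lemma size_Ls t : size (Ls t) = nodes t.
Proof. elim: t => //= l IHl r IHr; rewrite size_cat /= IHl IHr; lia. Qed.

Lemma Ls_bound t j : j < nodes t -> nth 0 (Ls t) j <= j.
Proof.
elim: t j => //= l IHl r IHr j Hj; rewrite nth_cat size_Ls.
case: ltnP => Hjl; first exact: IHl.
case E: (j - nodes l) => [|m] /=; first lia.
have := IHr m; lia.
Qed.

Lemma lsz_lt t k : 0 < k <= nodes t -> lsz t k < k.
Proof. move=> H; rewrite /lsz; have := @Ls_bound t k.-1; lia. Qed.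

Lemma lsz_node l r k :
  lsz (Node l r) k = if k <= nodes l then lsz l k
                     else if k == (nodes l).+1 then nodes l
                     else lsz r (k - (nodes l).+1).
Proof.
rewrite /lsz /= nth_cat size_Ls.
case: (leqP k (nodes l)) => Hk.
  case: k Hk => [|k] Hk /=; last by rewrite ifT //; lia.
  case: ltnP => // H; have : size (Ls l) = 0 by rewrite size_Ls; lia.
  by case: (Ls l) => //= _; lia.
have -> : (k.-1 < nodes l) = false by apply/negbTE; lia.
case: eqP => [->|Hne]; first by rewrite subnn.
case E: (k.-1 - nodes l) => [|m] /=; first lia.
congr nth; lia.
Qed.

Lemma Nt_node l r i k :
  Nt (Node l r) i k =
  [|| (k <= nodes l) && Nt l i k,
      (k == (nodes l).+1) && (0 < i < k) |
      ((nodes l).+1 < i) && Nt r (i - (nodes l).+1) (k - (nodes l).+1)].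
Proof.
rewrite /Nt lsz_node /=.
have Hl := @lsz_lt r (k - (nodes l).+1).
have Hl2 := @lsz_lt l k.
case: (leqP k (nodes l)) => Hk /=; first by apply/idP/idP => H; lia.
have [->|Hne] := eqVneq k (nodes l).+1; rewrite ?eqxx /=; first by apply/idP/idP => H; lia.
rewrite ?(negbTE Hne) /=.
by apply/idP/idP => H; lia.
Qed.

Lemma Nt_range t i k : Nt t i k -> [&& 0 < i, i < k & k <= nodes t].
Proof. by rewrite /Nt => H; lia. Qed.

Lemma Nt_int t i m k : Nt t i k -> i <= m -> m < k -> Nt t m k.
Proof. by rewrite /Nt => H1 H2 H3; lia. Qed.

Lemma Nt_trans t i m k : Nt t i m -> Nt t m k -> Nt t i k.
Proof.
elim: t i m k => [|l IHl r IHr] i m k; first by rewrite /Nt /=; lia.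
rewrite !Nt_node.
case/or3P => /andP[H1 H2]; case/or3P => /andP[H3 H4];
  try (move: (Nt_range H2) (Nt_range H4) => R1 R2; lia);
  try (move: (Nt_range H2) => R1; lia);
  try (move: (Nt_range H4) => R1; lia); try lia.
- by rewrite (IHl _ _ _ H2 H4) H3.
- apply/or3P; constructor 3; rewrite H1 /=; exact: IHr H2 H4.
Qed.

Lemma lsz_out t k : nodes t < k -> lsz t k = 0.
Proof. by move=> H; rewrite /lsz nth_default // size_Ls; lia. Qed.

Lemma lsz_l l r k : k <= nodes l -> lsz (Node l r) k = lsz l k.
Proof. by move=> H; rewrite lsz_node H. Qed.
Lemma lsz_root l r : lsz (Node l r) (nodes l).+1 = nodes l.
Proof. by rewrite lsz_node ltnn eqxx. Qed.
Lemma lsz_r l r k : (nodes l).+1 < k -> lsz (Node l r) k = lsz r (k - (nodes l).+1).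
Proof. move=> H; rewrite lsz_node ifF ?ifF //; apply/negbTE; lia. Qed.

Lemma nodes_tbs s t : nodes (tbs s t) = nodes s + nodes t.
Proof. elim: s => //= l _ r IH; rewrite IH; lia. Qed.
Lemma Ls_tbs s t : Ls (tbs s t) = Ls s ++ Ls t.
Proof. elim: s => //= l _ r IH; by rewrite IH -catA. Qed.
Lemma nodes_one k : nodes (Defs.one k) = k.
Proof. elim: k => //= k ->; lia. Qed.
Lemma Ls_one k : Ls (Defs.one k) = iota 0 k.
Proof. elim: k => //= k IH; rewrite IH nodes_one. have -> : 0 :: iota 1 k = iota 0 (k + 1) by rewrite addn1. by rewrite iotaD. Qed.

Lemma tam_trans t u v : tam_le t u -> tam_le u v -> tam_le t v.
Proof. elim=> // t1 u1 v1 H _ IH H2; apply: tam_step H (IH H2). Qed.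
Lemma tam_nodeL l l' r : tam_le l l' -> tam_le (Node l r) (Node l' r).
Proof. elim=> [t|t u v H _ IH]; first exact: tam_refl. apply: tam_step (rot_l _ H) IH. Qed.
Lemma tam_nodeR l r r' : tam_le r r' -> tam_le (Node l r) (Node l r').
Proof. elim=> [t|t u v H _ IH]; first exact: tam_refl. apply: tam_step (rot_r _ H) IH. Qed.
Lemma tam_node l l' r r' : tam_le l l' -> tam_le r r' -> tam_le (Node l r) (Node l' r').
Proof. move=> H1 H2; apply: tam_trans (tam_nodeL _ H1) (tam_nodeR _ H2). Qed.
Lemma tam_rot t u : Defs.rot t u -> tam_le t u.
Proof. move=> H; apply: tam_step H (tam_refl _). Qed.

Definition pw (t t' : tree) := forall k, 0 < k -> lsz t k <= lsz t' k.

Lemma rot_pw t u : Defs.rot t u -> nodes t = nodes u /\ pw u t.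
Proof.
elim=> [a b c|l l' r H [E P]|l r r' H [E P]]; split => /=; try lia; move=> k Hk.
- have Hb := @lsz_lt b (k - (nodes a).+1).
  case: (leqP k (nodes a)) => H1; first by rewrite !lsz_l //=; lia.
  case: (ltngtP k (nodes a).+1) => H2; try lia; last by rewrite H2 lsz_root lsz_l ?lsz_root //=; lia.
  rewrite (@lsz_r a (Node b c)) //=.
  case: (leqP k (nodes a + nodes b).+1) => H3.
    rewrite (@lsz_l b c); last (simpl; lia).
    rewrite (@lsz_l (Node a b) c); last (simpl; lia).
    by rewrite (@lsz_r a b).
  case: (ltngtP k (nodes a + nodes b).+2) => H4; try lia.
    rewrite (@lsz_r b c); last lia.
    rewrite (@lsz_r (Node a b) c) /=; last lia.
    by have -> : k - (nodes a).+1 - (nodes b).+1 = k - (nodes a + nodes b).+2 by lia.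
  have E1 : k - (nodes a).+1 = (nodes b).+1 by lia.
  rewrite E1 lsz_root H4; have -> : (nodes a + nodes b).+2 = (nodes (Node a b)).+1 by [].
  rewrite lsz_root /=; lia.
- rewrite !lsz_node -E; case: ifP => H1; [exact: P | by case: ifP].
- rewrite !lsz_node; case: ifP => H1 //; case: ifP => H2 //; apply: P; lia.
Qed.

Lemma tam_pw t u : tam_le t u -> nodes t = nodes u /\ pw u t.
Proof.
elim=> [v|t1 u1 v1 H _ [E P]]; first by split => // k.
case: (rot_pw H) => E2 P2; split; first by rewrite E2.
move=> k Hk; apply: leq_trans (P k Hk) (P2 k Hk).
Qed.

Lemma lsz_le t k : lsz t k <= k.-1.
Proof.
case: (leqP k (nodes t)) => H; last by rewrite lsz_out.
case: k H => [|k] H; last by have := @lsz_lt t k.+1; lia.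
rewrite /lsz; case: t {H} => //= l r; rewrite nth_cat size_Ls.
case: (nodes l) (@Ls_bound l 0) => [|m] /=; case: (Ls l) => //= x s; lia.
Qed.

Lemma rootify t p : 0 < p <= nodes t -> lsz t p = p.-1 ->
  exists A B, [/\ nodes A = p.-1, nodes (Node A B) = nodes t, tam_le t (Node A B) &
    forall k, 0 < k -> lsz t k <= lsz (Node A B) k \/ (p < k /\ k - p.+1 <= lsz (Node A B) k)].
Proof.
elim: t p => [|l IHl r IHr] p /=; first lia.
move=> Hp Hl.
case: (ltngtP p (nodes l).+1) => Hpl.
- rewrite lsz_l in Hl; last lia.
  have [A [B' [nA nAB tl Hk]]] := IHl p ltac:(lia) Hl.
  exists A, (Node B' r); split => /=.
  + exact nA.
  + move: nAB => /= <-; lia.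
  + apply: tam_trans (tam_nodeL r tl) (tam_rot (rot_root A B' r)).
  + move=> k Hk0; move: nAB => /= nAB.
    case: (leqP k (nodes l)) => Hkl.
      have -> : lsz (Node A (Node B' r)) k = lsz (Node A B') k.
        case: (ltngtP k (nodes A).+1) => Hk1.
        * by rewrite !lsz_l; try lia.
        * rewrite (@lsz_r A (Node B' r)) // (@lsz_r A B') //.
          rewrite lsz_l //; lia.
        * by rewrite Hk1 !lsz_root.
      rewrite (@lsz_l l r) //; exact: Hk.
    case: (ltngtP k (nodes l).+1) => Hk2; try lia.
      left; rewrite (@lsz_r l r) // (@lsz_r A (Node B' r)) /=; last lia.
      rewrite (@lsz_r B' r); last lia.
      by have -> : k - (nodes A).+1 - (nodes B').+1 = k - (nodes l).+1 by lia.
    right; split; first lia.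
    rewrite Hk2 (@lsz_r A (Node B' r)) /=; last lia.
    have -> : (nodes l).+1 - (nodes A).+1 = (nodes B').+1 by lia.
    rewrite lsz_root; lia.
- rewrite lsz_r in Hl; last lia.
  have := @lsz_lt r (p - (nodes l).+1); lia.
- exists l, r; rewrite Hpl; split => //; first exact: tam_refl. by move=> k _; left.
Qed.

Lemma pw_tam t' : forall t, nodes t = nodes t' -> pw t' t -> tam_le t t'.
Proof.
elim: t' => [|A' IHA B' IHB] t E P.
  by case: t E P => //= *; apply: tam_refl.
set p := (nodes A').+1.
have Hp : lsz t p = p.-1.
  have := P p isT; rewrite lsz_root.
  have := @lsz_lt t p; rewrite E /=; lia.
have [A [B [nA nAB tl Hk]]] := @rootify t p ltac:(rewrite E /=; lia) Hp.
have P1 : forall k, 0 < k -> lsz (Node A' B') k <= lsz (Node A B) k.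
  move=> k Hk0; case: (Hk k Hk0) => [H|[H1 H2]]; first exact: leq_trans (P k Hk0) H.
  rewrite lsz_r; last by [].
  rewrite -/p; apply: leq_trans H2; have := lsz_le B' (k - p); lia.
apply: tam_trans tl _; apply: tam_node.
- apply: IHA; first by rewrite nA.
  move=> k Hk0; case: (leqP k (nodes A')) => Hk1; last by rewrite lsz_out.
  have := P1 k Hk0; rewrite !lsz_l //; lia.
- apply: IHB; first by move: nAB; rewrite E /=; lia.
  move=> k Hk0; have := P1 (k + p) ltac:(lia).
  rewrite (@lsz_r A' B') /=; last lia.
  rewrite (@lsz_r A B) /=; last lia.
  by rewrite nA -/p (_ : k + p - p = k); last lia.
Qed.

Lemma tam_iff t t' : nodes t = nodes t' -> (tam_le t t' <-> pw t' t).
Proof. move=> E; split; [by case/tam_pw | exact: pw_tam]. Qed.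

Lemma pw_Nt t t' : nodes t = nodes t' ->
  (pw t t' <-> forall i k, Nt t i k -> Nt t' i k).
Proof.
move=> E; split.
  move=> P i k; rewrite /Nt -E => H; have := P k ltac:(lia); lia.
move=> H k Hk; case: (leqP k (nodes t)) => Hk1; last by rewrite lsz_out.
case E1: (lsz t k) => [|m] //.
have := H (k - m.+1) k; rewrite /Nt -E E1.
have := lsz_lt (t:=t) (k:=k); have := lsz_lt (t:=t') (k:=k); rewrite -E; lia.
Qed.

Lemma perm_size' n s : is_perm n s -> size s = n.
Proof. by move/perm_size; rewrite size_iota. Qed.
Lemma perm_uniq' n s : is_perm n s -> uniq s.
Proof. by move/perm_uniq => ->; apply: iota_uniq. Qed.
Lemma perm_mem' n s x : is_perm n s -> (x \in s) = (0 < x <= n).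
Proof. by move/perm_mem => ->; rewrite mem_iota; nlia. Qed.

Lemma perm_of n s : uniq s -> size s = n -> (forall x, x \in s -> 0 < x <= n) -> is_perm n s.
Proof.
move=> U S H; apply: uniq_perm => //; first exact: iota_uniq.
have [] := @uniq_min_size _ s (iota 1 n) U; last by [].
- by move=> x /H; rewrite mem_iota; nlia.
- by rewrite size_iota S.
Qed.

Lemma pv_mem s i : 0 < i <= size s -> pv s i \in s.
Proof. by move=> H; rewrite /pv; apply: mem_nth; nlia. Qed.

Lemma pv_inj s i k : uniq s -> 0 < i <= size s -> 0 < k <= size s -> pv s i = pv s k -> i = k.
Proof.
move=> U Hi Hk; rewrite /pv => E.
have := @nth_uniq _ 0 s i.-1 k.-1 ltac:(lia) ltac:(lia) U; rewrite E eqxx; nlia.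
Qed.

Lemma pv_perm n s i : is_perm n s -> 0 < i <= n -> 0 < pv s i <= n.
Proof. move=> P Hi; rewrite -(perm_mem' _ P); apply: pv_mem; rewrite (perm_size' P); nlia. Qed.

Lemma count_lt_mono (a : seq nat) x y : x <= y -> count (fun z => z < x) a <= count (fun z => z < y) a.
Proof. move=> H; apply: sub_count => z /=; nlia. Qed.

Lemma count_lt_smono (a : seq nat) x y : x \in a -> x < y -> count (fun z => z < x) a < count (fun z => z < y) a.
Proof.
move=> Ha H.
have E : count (fun z => z < y) a = count (fun z => z < x) a + count (fun z => x <= z < y) a.
  rewrite -count_predUI; have -> : count (predI (fun z => z < x) (fun z => x <= z < y)) a = 0.
    by apply/eqP; rewrite -leqn0 leqNgt -has_count; apply/hasP => [[z _ /=]]; nlia.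
  rewrite addn0; apply: eq_count => z /=; nlia.
rewrite E -[X in X < _]addn0 ltn_add2l -has_count; apply/hasP; exists x => //=; nlia.
Qed.

Lemma count_lt_size (a : seq nat) x : x \in a -> count (fun z => z < x) a < size a.
Proof.
move=> Ha; rewrite -(count_predC (fun z => z < x) a) -[X in X < _]addn0 ltn_add2l -has_count.
by apply/hasP; exists x => //=; rewrite ltnn.
Qed.

Lemma size_st a : size (st a) = size a.
Proof. by rewrite size_map. Qed.

Lemma pv_st a i : 0 < i <= size a -> pv (st a) i = (count (fun y => y < pv a i) a).+1.
Proof. by move=> H; rewrite /pv /st (nth_map 0) //; nlia. Qed.

Lemma st_lt a i k : 0 < i <= size a -> 0 < k <= size a ->
  (pv (st a) i < pv (st a) k) = (pv a i < pv a k).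
Proof.
move=> Hi Hk; rewrite !pv_st // ltnS.
case: (ltnP (pv a i) (pv a k)) => H.
  by apply: count_lt_smono => //; apply: pv_mem.
by apply/negbTE; rewrite -leqNgt; apply: count_lt_mono.
Qed.

Lemma st_perm a : uniq a -> is_perm (size a) (st a).
Proof.
move=> U; apply: perm_of; last by move=> x /mapP [y Hy ->]; have := count_lt_size Hy; nlia.
- rewrite map_inj_in_uniq // => x y Hx Hy /= E.
  case: (ltngtP x y) => // H.
  + by have := count_lt_smono Hx H; nlia.
  + by have := count_lt_smono Hy H; nlia.
- by rewrite size_st.
Qed.

Lemma pv_take m s i : 0 < i <= m -> pv (take m s) i = pv s i.
Proof. move=> H; rewrite /pv nth_take //; nlia. Qed.
Lemma pv_drop m s i : 0 < i -> pv (drop m s) i = pv s (i + m).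
Proof. move=> H; rewrite /pv nth_drop; congr nth; nlia. Qed.

Lemma weak_refl s : weak_le s s. Proof. by []. Qed.
Lemma weak_trans s t u : weak_le s t -> weak_le t u -> weak_le s u.
Proof. by move=> H1 H2 i j /H1 /H2. Qed.

Lemma pv_cat s t i : 0 < i -> pv (s ++ t) i = if i <= size s then pv s i else pv t (i - size s).
Proof.
rewrite /pv nth_cat; case: i => [|i] //= _.
case: ifP => // H; congr nth; nlia.
Qed.

Lemma pv_pbs s t i : 0 < i ->
  pv (pbs s t) i = if i <= size s then pv s i + size t else pv t (i - size s).
Proof.
move=> Hi; rewrite /pbs pv_cat // size_map; case: ifP => // H.
rewrite /pv (nth_map 0); [by rewrite addnC | nlia].
Qed.

Lemma pv_pvee s t i : 0 < i ->
  pv (pvee s t) i = if i <= size s then pv s i + size t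
                    else if i == (size s).+1 then (size s + size t).+1
                    else pv t (i - (size s).+1).
Proof.
move=> Hi; rewrite /pvee pv_cat // size_map; case: ifP => H.
  rewrite /pv (nth_map 0); [by rewrite addnC | nlia].
case: eqP => [->|Hne]; first by rewrite /pv subSnn.
have -> : i - size s = (i - (size s).+1).+1 by nlia.
rewrite /pv /=; case E: (i - (size s).+1) => [|m] //=; nlia.
Qed.

Lemma perm_pbs a b s t : is_perm a s -> is_perm b t -> is_perm (a + b) (pbs s t).
Proof.
move=> Ps Pt; rewrite /pbs /is_perm (perm_size' Pt).
apply: (@perm_trans _ (t ++ map (addn b) s)); first by rewrite perm_catC.
have -> : iota 1 (a + b) = iota 1 b ++ map (addn b) (iota 1 a).
  by rewrite -iotaDl addnC iotaD; congr (_ ++ iota _ _); lia.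
by apply: perm_cat => //; apply: perm_map.
Qed.

Lemma perm_pvee a b s t : is_perm a s -> is_perm b t -> is_perm (a + b).+1 (pvee s t).
Proof.
move=> Ps Pt; rewrite /pvee /is_perm (perm_size' Pt) (perm_size' Ps).
apply: (@perm_trans _ (t ++ map (addn b) s ++ [:: (a + b).+1])).
  by rewrite -cat_rcons -cats1 perm_catC catA.
have -> : iota 1 (a + b).+1 = iota 1 b ++ map (addn b) (iota 1 a) ++ [:: (a+b).+1].
  have -> : (a+b).+1 = b + (a + 1) by lia.
  rewrite iotaD iotaD -iotaDl /=; congr (_ ++ _ ++ _); first (congr iota; lia).
  by congr [:: _]; lia.
by apply: perm_cat => //; apply: perm_cat => //; apply: perm_map.
Qed.

Lemma size_gam t : size (gam t) = nodes t.
Proof. elim: t => //= l IHl r IHr; rewrite /pvee size_cat /= size_map IHl IHr; lia. Qed.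

Lemma perm_gam t : is_perm (nodes t) (gam t).
Proof. elim: t => //= l IHl r IHr; exact: perm_pvee. Qed.

Lemma inv_gam t i k : Defs.inv_pair (gam t) i k = [&& 0 < i, i < k, k <= nodes t & ~~ Nt t i k].
Proof.
elim: t i k => [|l IHl r IHr] i k; first by rewrite /Defs.inv_pair /Nt /=; lia.
rewrite /Defs.inv_pair size_gam Nt_node /=.
case: (ltnP 0 i) => Hi0 /=; last by lia.
case: (ltnP i k) => Hik /=; last by lia.
have Pl := perm_gam l; have Pr := perm_gam r.
rewrite !pv_pvee ?(size_gam) //; try lia.
case: (leqP k (nodes l)) => Hk.
  rewrite (_ : i <= nodes l); last lia.
  have E := IHl i k; rewrite /Defs.inv_pair size_gam Hi0 Hik Hk /= in E.
  rewrite ltn_add2r E.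
  have -> : (k == (nodes l).+1) = false by lia.
  have -> : ((nodes l).+1 < i) = false by lia.
  by rewrite /= orbF; case: (Nt l i k).
case: (leqP k (nodes l + nodes r).+1) => Hkn /=; last by [].
have [Ek|Nk] := eqVneq k (nodes l).+1.
  rewrite Ek (_ : i <= nodes l) /=; last lia.
  by have := @pv_perm _ _ i Pl; lia.
rewrite ?(negbTE Nk) /=.
have Hr := @pv_perm _ _ (k - (nodes l).+1) Pr.
case: (leqP i (nodes l)) => Hil.
  have := @pv_perm _ _ i Pl; move: Hr; rewrite (_ : (nodes l).+1 < i = false) /=; lia.
have [Ei|Ni] := eqVneq i (nodes l).+1.
  by rewrite Ei ?eqxx ltnn /=; lia.
rewrite ?(negbTE Ni) (_ : (nodes l).+1 < i); last lia.
have E := IHr (i - (nodes l).+1) (k - (nodes l).+1).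
rewrite /Defs.inv_pair size_gam in E.
have h1 : 0 < i - (nodes l).+1 by lia.
have h2 : i - (nodes l).+1 < k - (nodes l).+1 by lia.
have h3 : k - (nodes l).+1 <= nodes r by lia.
by rewrite h1 h2 h3 /= in E; rewrite E.
Qed.

Lemma st_take_lt s m i k : m <= size s -> 0 < i <= m -> 0 < k <= m ->
  (pv (st (take m s)) i < pv (st (take m s)) k) = (pv s i < pv s k).
Proof.
move=> Hm Hi Hk; rewrite st_lt ?size_take; try (case: ifP; nlia).
by rewrite (pv_take _ Hi) (pv_take _ Hk).
Qed.

Lemma st_drop_lt s m i k : 0 < i <= size s - m -> 0 < k <= size s - m ->
  (pv (st (drop m s)) i < pv (st (drop m s)) k) = (pv s (i + m) < pv s (k + m)).
Proof.
move=> Hi Hk; rewrite st_lt ?size_drop; try nlia.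
by rewrite !pv_drop //; nlia.
Qed.

Lemma perm_lt_n n s k : is_perm n s -> 0 < k <= n -> pv s k != n -> pv s k < n.
Proof. move=> P Hk; have := pv_perm P Hk; lia. Qed.

Definition lamP n s t := nodes t = n /\
  forall i k, Nt t i k <-> (0 < i < k /\ k <= n /\ forall m, i <= m < k -> pv s m < pv s k).

Lemma lam_f_char f : forall n s, is_perm n s -> n <= f -> lamP n s (lam_f f s).
Proof.
elim: f => [|f IH] n s P Hf.
  have n0 : n = 0 by lia. subst n.
  split => //= i k; rewrite /Nt /=; split; [lia | move=> [H1 [H2 _]]; lia].
case: s P => [|x s'] P.
  have n0 : n = 0 by rewrite -(perm_size' P). subst n.
  split => //= i k; rewrite /Nt /=; split; [lia | move=> [H1 [H2 _]]; lia].
set s := x :: s'.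
have Sz := perm_size' P; have U := perm_uniq' P.
have Hn : 0 < n by rewrite -Sz.
have Hmem : n \in s by rewrite (perm_mem' _ P); lia.
set j := (index n s).+1.
have -> : lam_f f.+1 s = Node (lam_f f (st (take j.-1 s))) (lam_f f (st (drop j s))).
  by rewrite /j /s /= -Sz.
have Hj : j <= n by rewrite /j; have := index_mem n s; rewrite Hmem /s Sz; lia.
have Pj : pv s j = n by rewrite /pv /j /= nth_index.
have Pjinj : forall m, 0 < m <= n -> pv s m = n -> m = j.
  by move=> m Hm E; apply: (pv_inj U); rewrite ?Sz ?E ?Pj //; lia.
set a := st (take j.-1 s); set b := st (drop j s).
have Pa : is_perm j.-1 a.
  by have := st_perm (take_uniq j.-1 U); rewrite size_take Sz; case: ltnP => //; lia.
have Pb : is_perm (n - j) b.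
  by have := st_perm (drop_uniq j U); rewrite size_drop Sz.
have [na Ha] := IH _ _ Pa ltac:(lia).
have [nb Hb] := IH _ _ Pb ltac:(lia).
split; first by rewrite /= na nb; lia.
move=> i k; rewrite Nt_node na (_ : j.-1.+1 = j); last lia.
case: (ltngtP k j) => Hkj.
- rewrite (_ : k <= j.-1); last lia.
  split.
    case/or3P => [/andP[_ /Ha [H1 [H2 H3]]] | /and3P[]// | /andP[_ H]]; last by move/Nt_range: H; lia.
    split=> //; split; first lia.
    move=> m Hm; have := H3 m Hm.
    by rewrite /a st_take_lt ?Sz //; lia.
  move=> [H1 [H2 H3]]; apply/or3P; constructor 1; apply/andP; split => //; apply/Ha.
  split=> //; split; first lia.
  move=> m Hm; rewrite /a st_take_lt ?Sz; try lia. exact: H3.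
- have -> : (k <= j.-1) = false by lia.
  case: (ltnP j i) => Hji /=.
    rewrite (Hb (i - j) (k - j)); split.
      move=> [H1 [H2 H3]]; split; first lia; split; first lia.
      move=> m Hm; have := H3 (m - j) ltac:(lia).
      rewrite /b st_drop_lt ?Sz; try lia.
      by rewrite !subnK //; lia.
    move=> [H1 [H2 H3]]; split; first lia; split; first lia.
    move=> m Hm; rewrite /b st_drop_lt ?Sz; try lia.
    rewrite subnK; last lia. apply: H3; lia.
  split => // [[H1 [H2 H3]]].
  have := H3 j ltac:(lia); rewrite Pj.
  have := @pv_perm _ _ k P ltac:(lia); rewrite -/s; lia.
- rewrite Hkj; have -> : (j <= j.-1) = false by lia.
  split; last by move=> [H1 _]; apply/or3P; constructor 2; lia.
  case/or3P => [//|/and3P[_ H0 H1]|/andP[_ /Nt_range]]; last lia.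
  split; first lia; split; first lia.
  move=> m Hm; rewrite Pj; apply: perm_lt_n P _ _; first lia.
  by apply/eqP => E; have := Pjinj m ltac:(lia) E; lia.
Qed.

Lemma lam_char n s : is_perm n s -> lamP n s (lam s).
Proof. move=> P; rewrite /lam (perm_size' P); exact: lam_f_char P _. Qed.

Lemma decideP (P : Prop) : decide P <-> P.
Proof. rewrite /decide; case: excluded_middle_informative => //. Qed.

Lemma mem_take_pos p s x : x \in take p s -> exists a, [/\ 0 < a <= p, a <= size s & pv s a = x].
Proof.
case/(nthP 0) => i; rewrite size_take => Hi <-.
exists i.+1; rewrite /pv /= nth_take; last by move: Hi; case: ifP; nlia.
split => //; move: Hi; case: ifP; nlia.
Qed.

Lemma mem_drop_pos p s y : y \in drop p s -> exists k, [/\ p < k <= size s & pv s k = y].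
Proof.
case/(nthP 0) => i; rewrite size_drop => Hi <-.
exists (p + i).+1; rewrite /pv /= nth_drop; split => //; nlia.
Qed.

Definition gdesP n s p := 0 < p < n /\ forall a b, 0 < a <= p -> p < b <= n -> pv s b < pv s a.

Lemma GDes_char n s p : is_perm n s -> (GDes s p <-> gdesP n s p).
Proof.
move=> P; have Sz := perm_size' P; have U := perm_uniq' P.
rewrite /GDes Sz; split.
  case/andP => Hp /decideP [a [b [Pa [Pb E]]]]; split => // x y Hx Hy.
  rewrite E !pv_pbs; try lia.
  rewrite (perm_size' Pa) (perm_size' Pb).
  case: ifP => Hy'; first lia. case: ifP => Hx'; last lia.
  have := @pv_perm _ _ x Pa ltac:(lia).
  have := @pv_perm _ _ (y - p) Pb ltac:(lia); lia.
move=> [Hp H]; rewrite Hp /=; apply/decideP.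
have Hd : forall y, y \in drop p s -> y <= n - p.
  move=> y /mem_drop_pos [k [Hk Ek]].
  have : size (take p s) <= size (iota y.+1 (n - y)).
    apply: uniq_leq_size; first exact: take_uniq.
    move=> x /mem_take_pos [a [Ha Ha2 Ex]]; rewrite mem_iota.
    have := H a k Ha ltac:(nlia); have := @pv_perm _ _ a P ltac:(nlia); nlia.
  rewrite size_take size_iota; case: ifP; nlia.
have Ht : forall x, x \in take p s -> n - p < x.
  move=> x /mem_take_pos [a [Ha Ha2 Ex]].
  have : size (drop p s) <= size (iota 1 x.-1).
    apply: uniq_leq_size; first exact: drop_uniq.
    move=> y /mem_drop_pos [k [Hk Ek]]; rewrite mem_iota.
    have := H a k Ha ltac:(nlia); have := @pv_perm _ _ k P ltac:(nlia); nlia.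
  rewrite size_drop size_iota; nlia.
have Hts : forall x, x \in take p s -> x <= n.
  by move=> x /mem_take_pos [a [Ha Ha2 <-]]; have := @pv_perm _ _ a P ltac:(nlia); lia.
exists (map (fun x => x - (n - p)) (take p s)), (drop p s); split; [|split].
- apply: perm_of.
  + rewrite map_inj_in_uniq; first exact: take_uniq.
    move=> x y Hx Hy /=; have := Ht _ Hx; have := Ht _ Hy; lia.
  + by rewrite size_map size_take; case: ifP; nlia.
  + move=> z /mapP [x Hx ->]; have := Ht _ Hx; have := Hts _ Hx; lia.
- apply: perm_of; first exact: drop_uniq.
  + by rewrite size_drop; nlia.
  + move=> y Hy; have := Hd _ Hy; suff : y \in s by rewrite (perm_mem' _ P); lia.
    by rewrite -(cat_take_drop p s) mem_cat Hy orbT.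
- rewrite /pbs size_drop -map_comp map_id_in ?cat_take_drop //.
  move=> x Hx /=; have := Ht _ Hx; nlia.
Qed.

Lemma gam_lt_Nt t i k : [&& 0 < i, i < k & k <= nodes t] -> (pv (gam t) i < pv (gam t) k) = Nt t i k.
Proof.
move=> H; have := inv_gam t i k; rewrite /Defs.inv_pair size_gam.
have h1 : 0 < i by lia. have h2 : i < k by lia. have h3 : k <= nodes t by lia.
rewrite h1 h2 h3 /=.
move=> E; rewrite -[Nt t i k]negbK -E.
have P := perm_gam t.
have Ne : pv (gam t) i != pv (gam t) k.
  apply/eqP => E2; have := pv_inj (perm_uniq' P) _ _ E2; rewrite size_gam; lia.
move: Ne; case: ltngtP => //.
Qed.

Lemma restr t a b : a <= b <= nodes t -> exists T, nodes T = b - a /\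
  forall i k, Nt T i k <-> (0 < i /\ k <= b - a /\ Nt t (i + a) (k + a)).
Proof.
move=> Hab.
set tau := st (take (b - a) (drop a (gam t))).
have Sz : size (take (b - a) (drop a (gam t))) = b - a.
  rewrite size_take size_drop size_gam; case: ifP; lia.
have P : is_perm (b - a) tau.
  rewrite -Sz; apply: st_perm; apply: take_uniq; apply: drop_uniq; exact: perm_uniq' (perm_gam t).
have [nT HT] := lam_char P.
exists (lam tau); split => // i k; rewrite HT.
have Htr : forall m, 0 < m < k -> k <= b - a -> (pv tau m < pv tau k) = Nt t (m + a) (k + a).
  move=> m Hm Hk; rewrite /tau st_lt ?Sz; try lia.
  rewrite !pv_take; try lia. rewrite !pv_drop; try lia.
  apply: gam_lt_Nt; lia.
split.
  move=> [H1 [H2 H3]]; split; first lia; split => //.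
  by have := H3 i ltac:(lia); rewrite Htr //; lia.
move=> [H1 [H2 H3]]; have := Nt_range H3 => R.
split; first lia; split => //.
move=> m Hm; rewrite Htr; try lia.
apply: Nt_int H3 _ _; lia.
Qed.

Lemma head_filter_iota (P : pred nat) a m d :
  let j := head d [seq p <- iota a m | P p] in
  (j = d /\ forall p, a <= p < a + m -> ~~ P p) \/
  ([/\ a <= j < a + m, P j & forall p, a <= p < j -> ~~ P p]).
Proof.
elim: m a => [|m IH] a /=; first by left; split => // p; lia.
case: ifP => Pa /=.
  by right; split => //; [lia | move=> p; lia].
case: (IH a.+1) => [[E H]|[H1 H2 H3]].
  left; split => // p Hp; case: (ltngtP p a) => Hpa; try lia.
    apply: H; lia.
  by rewrite Hpa Pa.
right; split => //; first lia.
move=> p Hp; case: (ltngtP p a) => Hpa; try lia.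
  apply: H3; lia.
by rewrite Hpa Pa.
Qed.

Definition rhoP n s t := [/\ nodes t = n,
  (forall i k, 0 < i -> i < k -> k <= n -> pv s i < pv s k -> Nt t i k) &
  (forall t', nodes t' = n ->
     (forall i k, 0 < i -> i < k -> k <= n -> pv s i < pv s k -> Nt t' i k) ->
     forall i k, Nt t i k -> Nt t' i k)].

Lemma perm_neq n s i k : is_perm n s -> 0 < i <= n -> 0 < k <= n -> i != k -> pv s i != pv s k.
Proof.
move=> P Hi Hk Ne; apply/eqP => E; have := pv_inj (perm_uniq' P) _ _ E.
rewrite (perm_size' P); move: Ne => /eqP; lia.
Qed.

Lemma rho_f_char f : forall n s, is_perm n s -> n <= f -> rhoP n s (rho_f f s).
Proof.
elim: f => [|f IH] n s P Hf.
  have n0 : n = 0 by lia. subst n.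
  by split => //= [i k|t' _ _ i k]; rewrite /Nt /=; lia.
case: s P => [|x s'] P.
  have n0 : n = 0 by rewrite -(perm_size' P). subst n.
  by split => //= [i k|t' _ _ i k]; rewrite /Nt /=; lia.
set s := x :: s'.
have Sz := perm_size' P; have U := perm_uniq' P.
have Hn : 0 < n by rewrite -Sz.
set j := head n [seq p <- iota 1 n.-1 | GDes s p].
have -> : rho_f f.+1 s = Node (rho_f f (st (take j.-1 s))) (rho_f f (st (drop j s))).
  by rewrite /j /s /= -Sz.
have [Hj1 Hj2 Hj3] : [/\ 0 < j <= n, j < n -> gdesP n s j & forall p, 0 < p < j -> ~ gdesP n s p].
  have := @head_filter_iota (GDes s) 1 n.-1 n; rewrite -/j.
  case => [[E H]|[H1 H2 H3]].
    split; first lia; first lia.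
    by move=> p Hp /(GDes_char _ P) Hg; have := H p ltac:(lia); rewrite Hg.
  split; first lia; first by move=> _; apply/(GDes_char _ P).
  by move=> p Hp /(GDes_char _ P) Hg; have := H3 p ltac:(lia); rewrite Hg.
set a := st (take j.-1 s); set b := st (drop j s).
have Pa : is_perm j.-1 a.
  by have := st_perm (take_uniq j.-1 U); rewrite size_take Sz; case: ltnP => //; lia.
have Pb : is_perm (n - j) b.
  by have := st_perm (drop_uniq j U); rewrite size_drop Sz.
have [na Ha1 Ha2] := IH _ _ Pa ltac:(lia).
have [nb Hb1 Hb2] := IH _ _ Pb ltac:(lia).
have tra : forall i k, 0 < i <= j.-1 -> 0 < k <= j.-1 -> (pv a i < pv a k) = (pv s i < pv s k).
  by move=> i k Hi Hk; rewrite /a st_take_lt ?Sz //; lia.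
have trb : forall i k, 0 < i <= n - j -> 0 < k <= n - j -> (pv b i < pv b k) = (pv s (i + j) < pv s (k + j)).
  by move=> i k Hi Hk; rewrite /b st_drop_lt ?Sz //.
have gd : forall i k, 0 < i <= j -> j < k <= n -> pv s k < pv s i.
  by move=> i k Hi Hk; case: (Hj2 ltac:(lia)) => _; apply.
split.
- by rewrite /= na nb; lia.
- move=> i k Hi Hik Hk Hlt; rewrite Nt_node na (_ : j.-1.+1 = j); last lia.
  case: (ltngtP k j) => Hkj.
  + apply/or3P; constructor 1; rewrite (_ : k <= j.-1) //=; last lia.
    by apply: Ha1; rewrite ?tra //; lia.
  + have Hij : j < i.
      case: (ltnP j i) => // Hij; have := gd i k ltac:(lia) ltac:(lia); lia.
    apply/or3P; constructor 3; rewrite Hij /=.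
    apply: Hb1; try lia; rewrite trb; try lia.
    by rewrite !subnK //; lia.
  + by apply/or3P; constructor 2; rewrite Hkj ?eqxx /=; lia.
- move=> t' nt' Ht' i k.
  have S1 : forall d i, 0 < i < j -> j - i <= d -> Nt t' i j.
    elim=> [|d IHd] i0 Hi0 Hd; first lia.
    have : ~ gdesP n s i0 by apply: Hj3; lia.
    rewrite /gdesP; move/not_and_or => [H|H]; first lia.
    move/not_all_ex_not: H => [a0 /not_all_ex_not [b0 H]].
    have [Ha0 H1] := imply_to_and _ _ H.
    have [Hb0 {}H] := imply_to_and _ _ H1.
    have Hab : pv s a0 < pv s b0.
      have := @perm_neq _ _ a0 b0 P ltac:(lia) ltac:(lia) ltac:(apply/eqP; lia).
      move: H; case: ltngtP => //.
    have Hb0j : b0 <= j.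
      case: (leqP b0 j) => // Hbj; have := gd a0 b0 ltac:(lia) ltac:(lia); lia.
    have Nab := Ht' a0 b0 ltac:(lia) ltac:(lia) ltac:(lia) Hab.
    case: (ltngtP b0 j) => Hbj; try lia.
      have Nbj := IHd b0 ltac:(lia) ltac:(lia).
      by apply: Nt_int (Nt_trans Nab Nbj) _ _; lia.
    by rewrite Hbj in Nab; apply: Nt_int Nab _ _; lia.
  have [T1 [nT1 HT1]] := @restr t' 0 j.-1 ltac:(lia).
  have S2 : forall i k, Nt (rho_f f a) i k -> Nt t' i k.
    move=> i1 k1 H1; have := Ha2 T1 ltac:(lia).
    have H : (forall i k, 0 < i -> i < k -> k <= j.-1 -> pv a i < pv a k -> Nt T1 i k).
      move=> i2 k2 Hi2 Hik2 Hk2; rewrite tra; try lia.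
      move=> Hl; apply/HT1; rewrite !addn0; split => //; split; first lia.
      by apply: Ht'; lia.
    move=> /(_ H i1 k1 H1) /HT1 [_ [_]]; by rewrite !addn0.
  have [T2 [nT2 HT2]] := @restr t' j n ltac:(lia).
  have S3 : forall i k, Nt (rho_f f b) i k -> Nt t' (i + j) (k + j).
    move=> i1 k1 H1; have := Hb2 T2 ltac:(lia).
    have H : (forall i k, 0 < i -> i < k -> k <= n - j -> pv b i < pv b k -> Nt T2 i k).
      move=> i2 k2 Hi2 Hik2 Hk2; rewrite trb; try lia.
      move=> Hl; apply/HT2; split => //; split; first lia.
      by apply: Ht'; lia.
    by move=> /(_ H i1 k1 H1) /HT2 [_ [_]].
  have E1 : j.-1.+1 = j by clear -Hj1; lia.
  rewrite Nt_node na E1.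
  case/or3P => [/andP[_ /S2] //|/andP[/eqP -> H]|/andP[H1 H2]].
    apply: S1 (j - i) _ _ _ => //; lia.
  have := Nt_range H2 => R; move/S3: H2.
  by rewrite !subnK //; lia.
Qed.

Lemma rho_char n s : is_perm n s -> rhoP n s (rho s).
Proof. move=> P; rewrite /rho (perm_size' P); exact: rho_f_char P _. Qed.

Lemma pvee_pbs a b c : pvee a (pbs b c) = pbs (pvee a b) c.
Proof.
rewrite /pvee /pbs !size_cat /= !size_map map_cat /= -catA /= -map_comp.
have -> : (size a + (size b + size c)).+1 = size c + (size a + size b).+1 by lia.
by congr (_ ++ _); apply: eq_map => x /=; lia.
Qed.

Lemma gam_tbs s t : gam (tbs s t) = pbs (gam s) (gam t).
Proof.
elim: s => [|l _ r IH] /=; first by rewrite /pbs.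
by rewrite IH pvee_pbs.
Qed.

Lemma gam_one k : gam (Defs.one k) = pid k.
Proof.
elim: k => //= k IH; rewrite IH /pvee /pid /= size_iota map_id_in; last by [].
have -> : 1 :: iota 2 k = iota 1 (k + 1) by rewrite addn1.
by rewrite iotaD addn0 add1n.
Qed.

Lemma gamC n S : gam (Cmap n S) = Zmap n S.
Proof.
rewrite /Cmap /Zmap; elim: (blocks n S) => //= k bs IH.
by rewrite gam_tbs IH gam_one.
Qed.

Lemma Ls_Cmap n S : Ls (Cmap n S) = flatten (map (iota 0) (blocks n S)).
Proof.
rewrite /Cmap; elim: (blocks n S) => //= k bs IH.
by rewrite Ls_tbs IH Ls_one.
Qed.

Definition FF x0 L := flatten (map (iota 0) (pairmap (fun a b => b - a) x0 L)).

Lemma FF_cons x0 p L : FF x0 (p :: L) = iota 0 (p - x0) ++ FF p L.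
Proof. by []. Qed.

Lemma path_last x L : path ltn x L -> x <= last x L.
Proof. elim: L x => //= q L IH x /andP [H1 H2]; have := IH q H2; lia. Qed.

Lemma size_FF x0 L : path ltn x0 L -> size (FF x0 L) = last x0 L - x0.
Proof.
elim: L x0 => [|p L IH] x0 /=; first by rewrite subnn.
case/andP => H1 H2; rewrite FF_cons size_cat size_iota.
rewrite (IH p H2).
suff : p <= last p L by lia.
exact: path_last H2.
Qed.

Lemma nth_FF x0 L j : nth 0 (FF x0 L) j <= j.
Proof.
elim: L x0 j => [|p L IH] x0 j; first by rewrite nth_nil.
rewrite FF_cons nth_cat size_iota; case: ltnP => H.
  by rewrite nth_iota.
have := IH p (j - (p - x0)); lia.
Qed.

Lemma FF_char x0 L i k : path ltn x0 L -> x0 < i -> i < k -> k <= last x0 L ->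
  (k - nth 0 (FF x0 L) (k - x0).-1 <= i) <-> (forall p, p \in L -> ~ (i <= p < k)).
Proof.
elim: L x0 => [|p L IH] x0; first by move=> /= _; lia.
move=> /= /andP [H1 H2] Hi Hik Hk.
have Hall := order_path_min ltn_trans H2; move/allP: Hall => Hall.
rewrite FF_cons nth_cat size_iota.
case: (leqP k p) => Hkp.
  rewrite ifT; last lia.
  rewrite nth_iota; last lia.
  split => [_ q|_]; last lia.
  rewrite inE => /orP [/eqP ->|/Hall]; lia.
rewrite ifF; last lia.
have Hk2 : k <= last p L by [].
case: (ltnP p i) => Hpi.
  have := IH p H2 Hpi Hik Hk2.
  rewrite (_ : (k - x0).-1 - (p - x0) = (k - p).-1); last lia.
  move=> ->; split => H q.
    rewrite inE => /orP [/eqP ->|Hq]; [lia | exact: H].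
  by move=> Hq; apply: H; rewrite inE Hq orbT.
split.
  have := nth_FF p L ((k - x0).-1 - (p - x0)); lia.
by move=> H; exfalso; apply: (H p); rewrite ?inE ?eqxx //; lia.
Qed.

Lemma Cmap0 S : Cmap 0 S = Leaf.
Proof. by []. Qed.

Lemma Cmap_char n S : qset n S -> nodes (Cmap n S) = n /\
  forall i k, Nt (Cmap n S) i k <-> [/\ 0 < i, i < k, k <= n & forall m, i <= m < k -> ~~ S m].
Proof.
move=> Q.
case: n Q => [|n] Q.
  split => // i k; rewrite /Nt /=; split; [lia| case; lia].
set L := rcons [seq i <- iota 1 n | S i] n.+1.
have Hb : blocks n.+1 S = pairmap (fun a b => b - a) 0 L by [].
have HL : Ls (Cmap n.+1 S) = FF 0 L by rewrite Ls_Cmap Hb.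
have Hp : path ltn 0 L.
  apply: (@subseq_path _ _ ltn_trans _ _ (iota 1 n.+1)); last first.
    by have := iota_ltn_sorted 0 n.+2.
  rewrite /L -cats1 (_ : iota 1 n.+1 = iota 1 n ++ [:: n.+1]); last by rewrite -[n.+1 in LHS]addn1 iotaD add1n.
  by apply: cat_subseq; [apply: filter_subseq | apply: subseq_refl].
have Hlast : last 0 L = n.+1 by rewrite /L last_rcons.
have Hn : nodes (Cmap n.+1 S) = n.+1 by rewrite -size_Ls HL size_FF // Hlast.
split => // i k; rewrite /Nt Hn /lsz HL.
case: (ltnP 0 i) => Hi /=; last by split; [lia| case; lia].
case: (ltnP i k) => Hik /=; last by split; [lia| case; lia].
case: (leqP k n.+1) => Hk /=; last by split; [lia| case; lia].
have := @FF_char 0 L i k Hp Hi Hik ltac:(lia); rewrite subn0 => ->.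
split.
  move=> H; split => // m Hm; apply/negP => Sm; apply: (H m) => //.
  rewrite /L mem_rcons inE mem_filter Sm mem_iota /=; have := Q m Sm; lia.
move=> [_ _ _ H] p; rewrite /L mem_rcons inE mem_filter => /orP [/eqP ->|/andP [Sp _]]; first lia.
by move=> Hp2; have := H p Hp2; rewrite Sp.
Qed.

Lemma size_leafdirs t b : size (leafdirs t b) = (nodes t).+1.
Proof. elim: t b => //= l IHl r IHr b; rewrite size_cat IHl IHr; lia. Qed.

Lemma leafdirs_nth t : forall b,
  (forall i, i < nodes t -> nth false (leafdirs t b) i = (lsz t i.+1 == 0)) /\
  nth false (leafdirs t b) (nodes t) = (if t is Leaf then b else false).
Proof.
elim: t => [|l IHl r IHr] b; first by split.
have [Hl1 Hl2] := IHl true; have [Hr1 Hr2] := IHr false.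
split.
  move=> i Hi; rewrite /= nth_cat size_leafdirs.
  case: (ltngtP i (nodes l)) => H.
  - rewrite ifT; last lia.
    by rewrite Hl1 // lsz_l.
  - rewrite ifF; last lia.
    rewrite Hr1; last by move: Hi => /=; lia.
    rewrite lsz_r; last lia.
    by have -> : i.+1 - (nodes l).+1 = (i - (nodes l).+1).+1 by lia.
  - rewrite H ifT // Hl2 lsz_root; by case: (l).
rewrite /= nth_cat size_leafdirs ifF; last lia.
by rewrite (_ : (nodes l + nodes r).+1 - (nodes l).+1 = nodes r) ?Hr2; [case: (r) | lia].
Qed.

Lemma Lmap_char t i : Lmap t i = (0 < i < nodes t) && ~~ Nt t i i.+1.
Proof.
rewrite /Lmap; case: (ltnP 0 i) => Hi //=; case: (ltnP i (nodes t)) => Hn //=.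
have [H1 _] := leafdirs_nth t false; rewrite H1 // /Nt.
have := @lsz_lt t i.+1; case: (lsz t i.+1) => [|m] /=; lia.
Qed.

Lemma nodes_eq0 t : nodes t = 0 -> t = Leaf.
Proof. by case: t. Qed.

Lemma lsz_tbs_r r r' k : nodes r < k -> lsz (tbs r r') k = lsz r' (k - nodes r).
Proof.
move=> H; rewrite /lsz Ls_tbs nth_cat size_Ls ifF; last lia.
congr nth; lia.
Qed.

Lemma Rmap_char t q : Rmap t q <-> 0 < q < nodes t /\ forall i k, i <= q < k -> ~~ Nt t i k.
Proof.
rewrite /Rmap; split.
  case/andP => Hq /decideP [r [r' [Er Et]]]; split => // i k Hik.
  rewrite Et /Nt nodes_tbs lsz_tbs_r; last lia.
  have := lsz_le r' (k - nodes r); lia.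
move=> [Hq H]; rewrite Hq /=; apply/decideP.
elim: t q Hq H => [|l IHl r0 IHr] q Hq H /=; first by move: Hq => /=; lia.
case: (ltngtP q (nodes l).+1) => Hql.
- by have := H q (nodes l).+1 ltac:(lia); rewrite Nt_node eqxx /=; lia.
- have Hq' : 0 < q - (nodes l).+1 < nodes r0 by move: Hq => /=; lia.
  have H' : forall i k, i <= q - (nodes l).+1 < k -> ~~ Nt r0 i k.
    move=> i k Hik; case: (ltnP 0 i) => Hi; last by rewrite /Nt; lia.
    have := H (i + (nodes l).+1) (k + (nodes l).+1) ltac:(lia).
    rewrite Nt_node; apply: contra => Hr; apply/or3P; constructor 3.
    rewrite !addnK Hr andbT; lia.
  have [r1 [r' [E1 E2]]] := IHr _ Hq' H'.
  exists (Node l r1), r'; split; first by rewrite /= E1; lia.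
  by rewrite /= -E2.
- by exists (Node l Leaf), r0; rewrite Hql /= addn0.
Qed.

Lemma inv_Zmap n S i k : qset n S ->
  Defs.inv_pair (Zmap n S) i k <-> [/\ 0 < i, i < k, k <= n & exists m, i <= m < k /\ S m].
Proof.
move=> Q; have [nC HC] := Cmap_char Q.
rewrite -gamC inv_gam nC; split.
  case/and4P => H1 H2 H3 H4; split => //.
  apply: NNPP => Hn; move/negP: H4; apply; apply/HC; split => // m Hm.
  by apply/negP => Sm; apply: Hn; exists m.
move=> [H1 H2 H3 [m [Hm Sm]]]; rewrite H1 H2 H3 /=; apply/negP => /HC [_ _ _ H].
by have := H m Hm; rewrite Sm.
Qed.

Lemma inv_perm n s i k : is_perm n s ->
  Defs.inv_pair s i k = [&& 0 < i, i < k, k <= n & pv s k < pv s i].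
Proof. by move=> P; rewrite /Defs.inv_pair (perm_size' P). Qed.

Lemma perm_lt_or n s i k : is_perm n s -> 0 < i -> i < k -> k <= n ->
  (pv s i < pv s k) = ~~ (pv s k < pv s i).
Proof.
move=> P Hi Hik Hk; have := @perm_neq _ _ i k P ltac:(lia) ltac:(lia) ltac:(apply/eqP; lia).
by case: ltngtP.
Qed.

Lemma tamN t t' : nodes t = nodes t' -> (tam_le t t' <-> forall i k, Nt t' i k -> Nt t i k).
Proof. move=> E; rewrite tam_iff //; exact: pw_Nt. Qed.

Lemma G13 n s t : is_perm n s -> nodes t = n -> (tam_le (lam s) t <-> weak_le s (gam t)).
Proof.
move=> P nt; have [nl Hl] := lam_char P.
rewrite tamN; last by rewrite nl nt.
split.
  move=> H i k; rewrite (inv_perm _ _ P) inv_gam nt => /and4P [H1 H2 H3 H4].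
  rewrite H1 H2 H3 /=; apply/negP => /H /Hl [_ [_ Hm]].
  by have := Hm i ltac:(lia); lia.
move=> H i k Ht; have R := Nt_range Ht; apply/Hl; split; first lia; split; first lia.
move=> m Hm; rewrite (perm_lt_or P); try lia.
apply/negP => Hlt; have := H m k; rewrite (inv_perm _ _ P) inv_gam nt.
have h1 : 0 < m by lia. have h2 : m < k by lia. have h3 : k <= n by lia.
rewrite Hlt h1 h2 h3 (Nt_int Ht) //=; last lia.
by move=> /(_ isT).
Qed.

Lemma G16 n t s : nodes t = n -> is_perm n s -> (weak_le (gam t) s <-> tam_le t (rho s)).
Proof.
move=> nt P; have [nr Hr1 Hr2] := rho_char P.
rewrite tamN; last by rewrite nr nt.
split.
  move=> H; apply: Hr2 => // i k Hi Hik Hk Hlt.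
  apply/negPn/negP => HN; have := H i k.
  rewrite (inv_perm _ _ P) inv_gam nt Hi Hik Hk HN /= => /(_ isT).
  lia.
move=> H i k; rewrite (inv_perm _ _ P) inv_gam nt => /and4P [H1 H2 H3 H4].
rewrite H1 H2 H3 /=; apply/negPn/negP => Hn.
move/negP: H4; apply; apply: H; apply: Hr1 => //.
by rewrite (perm_lt_or P).
Qed.

Lemma chainN t i k : i < k -> (forall m, i <= m < k -> Nt t m m.+1) -> Nt t i k.
Proof.
move=> Hik H.
have : forall d, forall j, i <= j < k -> k - j <= d -> Nt t j k.
  elim=> [|d IH] j Hj Hd; first lia.
  case: (ltngtP j.+1 k) => Hjk; try lia.
    by apply: Nt_trans (H j ltac:(lia)) (IH j.+1 ltac:(lia) ltac:(lia)).
  by rewrite -Hjk; apply: H; lia.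
by move=> /(_ (k - i) i ltac:(lia) (leqnn _)).
Qed.

Lemma G14 n t S : nodes t = n -> qset n S -> (subq (Lmap t) S <-> tam_le t (Cmap n S)).
Proof.
move=> nt Q; have [nC HC] := Cmap_char Q.
rewrite tamN; last by rewrite nC nt.
split.
  move=> H i k /HC [H1 H2 H3 H4]; apply: chainN => // m Hm.
  apply/negPn/negP => HN; move: (H4 m Hm) => /negP; apply; apply: H.
  by rewrite Lmap_char HN nt andbT; lia.
move=> H i; rewrite Lmap_char nt => /andP [Hi HN].
apply/negPn/negP => Sn; move/negP: HN; apply; apply: H; apply/HC.
by split => //; try lia; move=> m Hm; have -> : m = i by lia.
Qed.

Lemma G17 n S t : qset n S -> nodes t = n -> (tam_le (Cmap n S) t <-> subq S (Rmap t)).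
Proof.
move=> Q nt; have [nC HC] := Cmap_char Q.
rewrite tamN; last by rewrite nC nt.
split.
  move=> H q Sq; apply/Rmap_char; split; first by rewrite nt; exact: Q.
  move=> i k Hik; apply/negP => /H /HC [_ _ _ H4].
  by have := H4 q Hik; rewrite Sq.
move=> H i k Ht; have R := Nt_range Ht; apply/HC; split; try lia.
move=> m Hm; apply/negP => /H /Rmap_char [_ H2].
by have := H2 i k Hm; rewrite Ht.
Qed.

Lemma desc_exists s i k : i < k -> pv s k < pv s i -> exists m, i <= m < k /\ pv s m.+1 < pv s m.
Proof.
move=> Hik Hlt.
have : forall d j, i <= j < k -> k - j <= d -> pv s k < pv s j -> exists m, j <= m < k /\ pv s m.+1 < pv s m.
  elim=> [|d IH] j Hj Hd Hl; first lia.
  case: (ltnP (pv s j.+1) (pv s j)) => H.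
    by exists j; split => //; lia.
  case: (ltngtP j.+1 k) => Hjk; try lia.
    have [m [Hm1 Hm2]] := IH j.+1 ltac:(lia) ltac:(lia) ltac:(lia).
    by exists m; split => //; lia.
  by rewrite Hjk in H; lia.
by move=> /(_ (k - i) i ltac:(lia) (leqnn _) Hlt).
Qed.

Lemma G15 n s S : is_perm n s -> qset n S -> (subq (Des s) S <-> weak_le s (Zmap n S)).
Proof.
move=> P Q; split.
  move=> H i k; rewrite (inv_perm _ _ P) => /and4P [H1 H2 H3 H4].
  apply/(inv_Zmap _ _ Q); split => //.
  have [m [Hm1 Hm2]] := desc_exists H2 H4.
  exists m; split => //; apply: H.
  by rewrite /Des (perm_size' P) Hm2 andbT; lia.
move=> H i; rewrite /Des (perm_size' P) => /andP [Hi Hd].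
have := H i i.+1; rewrite (inv_perm _ _ P) Hd andbT.
have h1 : 0 < i by lia. have h2 : i < i.+1 by lia. have h3 : i.+1 <= n by lia.
rewrite h1 h2 h3 => /(_ isT) /(inv_Zmap _ _ Q) [_ _ _ [m [Hm Sm]]].
by have <- : m = i by lia.
Qed.

Lemma G18 n S s : qset n S -> is_perm n s -> (weak_le (Zmap n S) s <-> subq S (GDes s)).
Proof.
move=> Q P; split.
  move=> H q Sq; apply/(GDes_char _ P); split; first exact: Q.
  move=> a b Ha Hb; have := H a b; rewrite (inv_perm _ _ P).
  have Hz : Defs.inv_pair (Zmap n S) a b.
    by apply/(inv_Zmap _ _ Q); split; try lia; exists q; split => //; lia.
  by move=> /(_ Hz) /and4P [].
move=> H i k /(inv_Zmap _ _ Q) [H1 H2 H3 [m [Hm Sm]]].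
have /(GDes_char _ P) [_ Hg] := H m Sm.
by rewrite (inv_perm _ _ P) H1 H2 H3 /=; apply: Hg; lia.
Qed.

Lemma I10 n s : is_perm n s -> Lmap (lam s) =1 Des s.
Proof.
move=> P i; have [nl Hl] := lam_char P.
rewrite Lmap_char /Des nl (perm_size' P).
case: (ltnP 0 i) => Hi //=; case: (ltnP i n) => Hn //=.
have -> : Nt (lam s) i i.+1 = (pv s i < pv s i.+1).
  apply/idP/idP; first by move/Hl => [_ [_ H]]; apply: H; lia.
  by move=> H; apply/Hl; split; [lia|split; [lia| move=> m Hm; have -> : m = i by lia]].
by rewrite (perm_lt_or P) ?negbK //; lia.
Qed.

Lemma I12 n s : is_perm n s -> Rmap (rho s) =1 GDes s.
Proof.
move=> P q; have [nr _ _] := rho_char P.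
case: (boolP (0 < q < n)) => Hq; last first.
  rewrite /Rmap /GDes nr (perm_size' P); by rewrite (negbTE Hq).
have Q : qset n (pred1 q) by move=> i /eqP ->.
have [nC _] := Cmap_char Q.
have E : Rmap (rho s) q <-> GDes s q.
  have E1 : Rmap (rho s) q <-> subq (pred1 q) (Rmap (rho s)).
    by split => [H i /eqP -> //|H]; apply: H; rewrite /= eqxx.
  have E2 : GDes s q <-> subq (pred1 q) (GDes s).
    by split => [H i /eqP -> //|H]; apply: H; rewrite /= eqxx.
  rewrite E1 E2 -(G17 Q nr) -(G16 nC P) gamC; exact: G18.
by apply/idP/idP => /E.
Qed.

Theorem theorem2p1 (n : nat) :
  (* order preservation *)
  (forall t t', nodes t = n -> nodes t' = n -> tam_le t t' -> subq (Lmap t) (Lmap t')) /\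
  (forall t t', nodes t = n -> nodes t' = n -> tam_le t t' -> subq (Rmap t) (Rmap t')) /\
  (forall S S', qset n S -> qset n S' -> subq S S' -> tam_le (Cmap n S) (Cmap n S')) /\
  (forall s s', is_perm n s -> is_perm n s' -> weak_le s s' -> tam_le (lam s) (lam s')) /\
  (forall s s', is_perm n s -> is_perm n s' -> weak_le s s' -> tam_le (rho s) (rho s')) /\
  (forall t t', nodes t = n -> nodes t' = n -> tam_le t t' -> weak_le (gam t) (gam t')) /\
  (forall s s', is_perm n s -> is_perm n s' -> weak_le s s' -> subq (Des s) (Des s')) /\
  (forall s s', is_perm n s -> is_perm n s' -> weak_le s s' -> subq (GDes s) (GDes s')) /\
  (forall S S', qset n S -> qset n S' -> subq S S' -> weak_le (Zmap n S) (Zmap n S')) /\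
  (* identities *)
  (forall s, is_perm n s -> Lmap (lam s) =1 Des s) /\
  (forall S, qset n S -> gam (Cmap n S) = Zmap n S) /\
  (forall s, is_perm n s -> Rmap (rho s) =1 GDes s) /\
  (* Galois connections *)
  (forall s t, is_perm n s -> nodes t = n -> (tam_le (lam s) t <-> weak_le s (gam t))) /\
  (forall t S, nodes t = n -> qset n S -> (subq (Lmap t) S <-> tam_le t (Cmap n S))) /\
  (forall s S, is_perm n s -> qset n S -> (subq (Des s) S <-> weak_le s (Zmap n S))) /\
  (forall t s, nodes t = n -> is_perm n s -> (weak_le (gam t) s <-> tam_le t (rho s))) /\
  (forall S t, qset n S -> nodes t = n -> (tam_le (Cmap n S) t <-> subq S (Rmap t))) /\
  (forall S s, qset n S -> is_perm n s -> (weak_le (Zmap n S) s <-> subq S (GDes s))).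
Proof.
have nlam : forall s, is_perm n s -> nodes (lam s) = n by move=> s P; case: (lam_char P).
have nrho : forall s, is_perm n s -> nodes (rho s) = n by move=> s P; case: (rho_char P).
have nC : forall S, qset n S -> nodes (Cmap n S) = n by move=> S Q; case: (Cmap_char Q).
have pgam : forall t, nodes t = n -> is_perm n (gam t) by move=> t <-; exact: perm_gam.
have pZ : forall S, qset n S -> is_perm n (Zmap n S) by move=> S Q; rewrite -gamC; apply/pgam/nC.
have qL : forall t, nodes t = n -> qset n (Lmap t) by move=> t nt i; rewrite /Lmap nt => /andP [].
have qR : forall t, nodes t = n -> qset n (Rmap t) by move=> t nt i; rewrite /Rmap nt => /andP [].
have qD : forall s, is_perm n s -> qset n (Des s) by move=> s P i; rewrite /Des (perm_size' P) => /andP [].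
have qG : forall s, is_perm n s -> qset n (GDes s) by move=> s P i; rewrite /GDes (perm_size' P) => /andP [].
split.
  move=> t t' nt nt' H; apply/(G14 nt (qL t' nt')); apply: tam_trans H _.
  by apply/(G14 nt' (qL t' nt')).
split.
  move=> t t' nt nt' H; apply/(G17 (qR t nt) nt'); apply: tam_trans _ H.
  by apply/(G17 (qR t nt) nt).
split.
  move=> S S' Q Q' H; apply/(G14 (nC S Q) Q') => i Hi; apply: H.
  by move: i Hi; apply/(G14 (nC S Q) Q); apply: tam_refl.
split.
  move=> s s' P P' H; apply/(G13 P (nlam s' P')); apply: weak_trans H _.
  by apply/(G13 P' (nlam s' P')); apply: tam_refl.
split.
  move=> s s' P P' H; apply/(G16 (nrho s P) P'); apply: weak_trans _ H.
  by apply/(G16 (nrho s P) P); apply: tam_refl.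
split.
  move=> t t' nt nt' H; apply/(G16 nt (pgam t' nt')); apply: tam_trans H _.
  by apply/(G16 nt' (pgam t' nt')); apply: weak_refl.
split.
  move=> s s' P P' H; apply/(G15 P (qD s' P')); apply: weak_trans H _.
  by apply/(G15 P' (qD s' P')).
split.
  move=> s s' P P' H; apply/(G18 (qG s P) P'); apply: weak_trans _ H.
  by apply/(G18 (qG s P) P).
split.
  move=> S S' Q Q' H; apply/(G15 (pZ S Q) Q') => i Hi; apply: H.
  by move: i Hi; apply/(G15 (pZ S Q) Q); apply: weak_refl.
split; first by move=> s P; exact: I10 P.
split; first by move=> S _; exact: gamC.
split; first by move=> s P; exact: I12 P.
split; first by move=> s t P nt; exact: (G13 P nt).
split; first by move=> t S nt Q; exact: (G14 nt Q).
split; first by move=> s S P Q; exact: (G15 P Q).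
split; first by move=> t s nt P; exact: (G16 nt P).
split; first by move=> S t Q nt; exact: (G17 Q nt).
by move=> S s Q P; exact: (G18 Q P).
Qed.
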